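(* For every $n\ge1$ there are infinitely many pairwise non-isomorphic tautological algebras.
   Context: Work over $\mathbb{C}$. The Heisenberg group $\mathbb{H}_{2n+1}$ is $\mathbb{W}\times\mathbb{C}$ ($\mathbb{W}$ a $2n$-dimensional space with non-degenerate skew form $\omega$) with law $(w_1,t_1)(w_2,t_2)=(w_1+w_2,t_1+t_2+\tfrac12\omega(w_1,w_2))$; $T=(0,1)$, $\mathbb{I}=\mathbb{C}T$ its center. An $\mathbb{H}_{2n+1}$-structure on $\mathbb{P}V$, $V\cong\mathbb{C}^{2n+2}$, is an effective algebraic action with dense open orbit, whose boundary is a hyperplane $\mathbb{P}V'$. Viewing $\mathbb{H}_{2n+1}\subset\mathbb{P}\mathrm{GL}_{2n+2}(\mathbb{C})$ and with $\pi:\mathrm{GL}_{2n+2}\to\mathbb{P}\mathrm{GL}_{2n+2}$ the projection, the associated algebra $\mathcal{A}$ is the unital associative subalgebra of $\mathrm{Mat}_{2n+2}(\mathbb{C})$ generated by $\pi^{-1}(\mathbb{H}_{2n+1})$. For $o$ in the open orbit let $v=\overline{\mathbb{I}\cdot o}\setminus\mathbb{I}\cdot o$, $\hat v$ a representative, $\widetilde V=V/\mathbb{C}\hat v$; if $T$ fixes $\mathbb{P}V'$ pointwise, the action descends to a $\mathbb{G}_a^{2n}$-structure of $\mathbb{H}_{2n+1}/\mathbb{I}$ on $\mathbb{P}\widetilde V$, called tautological if in suitable coordinates it is $(a_i)\cdot[z_0,\dots,z_{2n}]=[z_0,z_1+a_1z_0,\dots,z_{2n}+a_{2n}z_0]$.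 A tautological algebra is the associated algebra $\mathcal{A}$ of an $\mathbb{H}_{2n+1}$-structure on $\mathbb{P}^{2n+1}$ for which $T$ fixes the boundary pointwise and the induced $\mathbb{G}_a^{2n}$-structure is tautological. Isomorphism means isomorphism of unital associative algebras. *)

(* Defs.v *)
From mathcomp Require Import all_boot all_algebra.
From mathcomp Require Import Rstruct complex.
From Stdlib Require Rdefinitions.

Set Implicit Arguments.
Unset Strict Implicit.
Unset Printing Implicit Defensive.
Import GRing.Theory.
Local Open Scope ring_scope.

Definition C : closedFieldType := complex Rdefinitions.R.

Definition dimW (n : nat) : nat := (n + n)%N.
Definition dimV (n : nat) : nat := (n + n).+2.

Definition omega (n : nat) (x y : 'rV[C]_(n + n)) : C :=
  \sum_(i < n) (x 0 (lshift n i) * y 0 (rshift n i)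
                - x 0 (rshift n i) * y 0 (lshift n i)).

Definition Heis (n : nat) : Type := ('rV[C]_(n + n) * C)%type.

Definition hmul (n : nat) (g h : Heis n) : Heis n :=
  (g.1 + h.1, g.2 + h.2 + 2^-1 * omega g.1 h.1).

Definition hone (n : nat) : Heis n := (0, 0).

Definition hcent (n : nat) (t : C) : Heis n := (0, t).

Definition heis_polyfun (n : nat) (f : Heis n -> C) : Prop :=
  exists s : seq (C * ((n + n).-tuple nat * nat)),
    forall g : Heis n,
      f g = \sum_(p <- s)
              p.1 * (\prod_(i < n + n) g.1 0 i ^+ tnth p.2.1 i) * g.2 ^+ p.2.2.

(** Points of P V are represented by nonzero column vectors; two vectors
    represent the same point iff they are proportional. *)
Definition proj_eq (N : nat) (x y : 'cV[C]_N) : Prop :=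
  exists c : C, c != 0 /\ y = c *: x.

Definition heval (N : nat) (s : seq (C * N.-tuple nat)) (x : 'cV[C]_N) : C :=
  \sum_(p <- s) p.1 * \prod_(i < N) x i 0 ^+ tnth p.2 i.

Definition homog (N : nat) (d : nat) (s : seq (C * N.-tuple nat)) : bool :=
  all (fun p => (\sum_(i < N) tnth p.2 i == d)%N) s.

(** Zariski closure in P V of a set S of points (S given as a cone of
    nonzero vectors): the common zero locus of all homogeneous polynomials
    vanishing on S. *)
Definition zclosure (N : nat) (S : 'cV[C]_N -> Prop) (x : 'cV[C]_N) : Prop :=
  x != 0 /\
  forall (d : nat) (s : seq (C * N.-tuple nat)), homog d s ->
    (forall y, S y -> heval s y = 0) -> heval s x = 0.

(** The algebraic action is
    given by a lift [rho : H -> GL_(2n+2)] with polynomial entries which is a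
    homomorphism modulo scalars (i.e. the composite H -> PGL_(2n+2) is a
    homomorphism of algebraic groups); it is effective (trivial kernel in
    PGL), and there is a point [o] whose orbit is exactly the complement of
    the hyperplane P V' = {l = 0} (so the orbit is open and dense, and its
    boundary is the hyperplane P V'). *)
Definition Hstructure (n : nat) (rho : Heis n -> 'M[C]_(dimV n))
    (l : 'rV[C]_(dimV n)) (o : 'cV[C]_(dimV n)) : Prop :=
  (forall i j, heis_polyfun (fun g => rho g i j)) /\
  (forall g, rho g \in unitmx) /\
  (forall g h, exists c : C, c != 0 /\ rho (hmul g h) = c *: (rho g *m rho h)) /\
  (forall g, (exists c : C, rho g = c%:M) -> g = hone n) /\
  l != 0 /\ o != 0 /\
  (forall x : 'cV[C]_(dimV n), x != 0 ->
         (l *m x != 0 <-> exists g, proj_eq (rho g *m o) x)).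

(** The standard tautological G_a^(2n)-action on P^(2n):
    (a_i) . [z_0, ..., z_2n] = [z_0, z_1 + a_1 z_0, ..., z_2n + a_2n z_0]. *)
Definition taut_mx (n : nat) (a : 'rV[C]_(n + n)) : 'M[C]_((n + n).+1) :=
  \matrix_(i, j) ((i == j)%:R +
                  (j == ord0)%:R *
                    (if unlift ord0 i is Some k then a 0 k else 0)).

(** [rho] is a tautological H_(2n+1)-structure: it is an H-structure with
    hyperplane P V' = {l = 0} and open orbit through [o]; T = (0,1) fixes
    P V' pointwise; [vhat] represents the point v, the unique point of the
    Zariski closure of I.o not in I.o; and the induced action of H/I = G_a^(2n)
    on P(V / C vhat) is tautological in suitable coordinates: [q] is a linear
    surjection V -> C^(2n+1) with kernel C vhat (a choice of coordinates
    z_0..z_2n on V / C vhat), and for every (w,t) the induced projective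
    transformation of P(V / C vhat) is the tautological one for a = w. *)
Definition tautological_structure (n : nat) (rho : Heis n -> 'M[C]_(dimV n)) : Prop :=
  exists (l : 'rV[C]_(dimV n)) (o vhat : 'cV[C]_(dimV n))
         (q : 'M[C]_((n + n).+1, dimV n)),
  Hstructure rho l o /\
  (forall x : 'cV[C]_(dimV n), x != 0 -> l *m x = 0 ->
         proj_eq x (rho (hcent n 1) *m x)) /\
  vhat != 0 /\
  (let Io := fun y => exists t : C, proj_eq (rho (hcent n t) *m o) y in
       forall x : 'cV[C]_(dimV n), x != 0 ->
         ((zclosure Io x /\ ~ Io x) <-> proj_eq vhat x)) /\
  \rank q = (n + n).+1 /\
  q *m vhat = 0 /\
  (forall g : Heis n, exists c : C, c != 0 /\
         q *m rho g = c *: (taut_mx g.1 *m q)).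

Inductive gen_alg (N : nat) (S : 'M[C]_N -> Prop) : 'M[C]_N -> Prop :=
  | gen_alg_gen M : S M -> gen_alg S M
  | gen_alg_one : gen_alg S 1%:M
  | gen_alg_add M M' : gen_alg S M -> gen_alg S M' -> gen_alg S (M + M')
  | gen_alg_scale (c : C) M : gen_alg S M -> gen_alg S (c *: M)
  | gen_alg_mul M M' : gen_alg S M -> gen_alg S M' -> gen_alg S (M *m M').

(** The associated algebra: generated by pi^-1(H) = { c rho(g) : c <> 0 }. *)
Definition assoc_alg (n : nat) (rho : Heis n -> 'M[C]_(dimV n)) : 'M[C]_(dimV n) -> Prop :=
  gen_alg (fun M => exists (c : C) (g : Heis n), c != 0 /\ M = c *: rho g).

Definition tautological_algebra (n : nat) (A : 'M[C]_(dimV n) -> Prop) : Prop :=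
  exists rho : Heis n -> 'M[C]_(dimV n),
    tautological_structure rho /\ (forall M, A M <-> assoc_alg rho M).

Definition alg_iso (N : nat) (A B : 'M[C]_N -> Prop) : Prop :=
  exists f : 'M[C]_N -> 'M[C]_N,
  (forall x, A x -> B (f x)) /\
  (forall y, B y -> exists2 x, A x & f x = y) /\
  (forall x y, A x -> A y -> f x = f y -> x = y) /\
  (forall x y, A x -> A y -> f (x + y) = f x + f y) /\
  (forall (c : C) x, A x -> f (c *: x) = c *: f x) /\
  (forall x y, A x -> A y -> f (x *m y) = f x *m f y) /\
  f 1%:M = 1%:M.

(* Main.v *)
Require Import Defs.
From mathcomp Require Import all_boot all_algebra.
From mathcomp Require Import ring Rstruct complex zify.
Set Implicit Arguments.
Unset Strict Implicit.
Unset Printing Implicit Defensive.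
Import GRing.Theory Num.Theory.
Local Open Scope ring_scope.

Section PF.
Variable n : nat.
Notation PF := (@heis_polyfun n).

Lemma pf_ext (f f' : Heis n -> C) : (forall g, f g = f' g) -> PF f' -> PF f.
Proof. by move=> e [s hs]; exists s => g; rewrite e hs. Qed.

Definition zt : (n + n).-tuple nat := [tuple 0%N | i < n + n].

Lemma pf_const c : PF (fun _ => c).
Proof.
exists [:: (c, (zt, 0%N))] => g; rewrite big_seq1; cbn [fst snd]; rewrite expr0 mulr1.
by rewrite big1 ?mulr1 // => i _; rewrite tnth_mktuple expr0.
Qed.

Lemma pf_t : PF (fun g => g.2).
Proof.
exists [:: (1, (zt, 1%N))] => g; rewrite big_seq1; cbn [fst snd]; rewrite expr1 mul1r.
by rewrite big1 ?mul1r // => i _; rewrite tnth_mktuple expr0.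
Qed.

Lemma pf_w k : PF (fun g => g.1 0 k).
Proof.
exists [:: (1, ([tuple (i == k : nat) | i < n + n], 0%N))] => g.
rewrite big_seq1; cbn [fst snd]; rewrite expr0 mulr1 mul1r (bigD1 k) // tnth_mktuple eqxx expr1.
by rewrite big1 ?Monoid.mulm1 // => i /negPf ik; rewrite tnth_mktuple ik expr0.
Qed.

Lemma pf_add f1 f2 : PF f1 -> PF f2 -> PF (fun g => f1 g + f2 g).
Proof. by move=> [s1 h1] [s2 h2]; exists (s1 ++ s2) => g; rewrite big_cat h1 h2. Qed.

Definition pmul (p1 p2 : C * ((n + n).-tuple nat * nat)) : C * ((n + n).-tuple nat * nat) :=
  (p1.1 * p2.1, ([tuple (tnth p1.2.1 i + tnth p2.2.1 i)%N | i < n + n], (p1.2.2 + p2.2.2)%N)).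

Lemma pf_mul f1 f2 : PF f1 -> PF f2 -> PF (fun g => f1 g * f2 g).
Proof.
move=> [s1 h1] [s2 h2]; exists [seq pmul p1 p2 | p1 <- s1, p2 <- s2] => g.
rewrite h1 h2 big_allpairs_dep big_distrl; apply: eq_bigr => p1 _.
rewrite big_distrr; apply: eq_bigr => p2 _; cbn [fst snd pmul].
rewrite exprD.
have -> : \prod_(i < n + n) g.1 0 i ^+ tnth [tuple (tnth p1.2.1 i + tnth p2.2.1 i)%N | i < n + n] i
   = (\prod_(i < n + n) g.1 0 i ^+ tnth p1.2.1 i) * \prod_(i < n + n) g.1 0 i ^+ tnth p2.2.1 i.
  by rewrite -big_split; apply: eq_bigr => i _; rewrite tnth_mktuple exprD.
rewrite -[LHS]/(_ * _).
ring.
Qed.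

Lemma pf_sum (I : Type) (r : seq I) (P : pred I) (F : I -> Heis n -> C) :
  (forall i, PF (F i)) -> PF (fun g => \sum_(i <- r | P i) F i g).
Proof.
move=> hF; elim: r => [|a r IH].
  by apply: pf_ext (pf_const 0) => g; rewrite big_nil.
case Pa: (P a).
  by apply: pf_ext (pf_add (hF a) IH) => g; rewrite big_cons Pa.
by apply: pf_ext IH => g; rewrite big_cons Pa.
Qed.
End PF.

Lemma sumdelta (T : finType) (a : T) (F : T -> C) :
  \sum_j (j == a)%:R * F j = F a.
Proof.
rewrite (bigD1 a) // eqxx mul1r big1 ?Monoid.mulm1 // => j /andP[_ /negPf ->].
by rewrite mul0r.
Qed.

Lemma colrow m k (a : 'cV[C]_m) (b : 'rV[C]_k) i j : (a *m b) i j = a i 0 * b 0 j.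
Proof. by rewrite mxE big_ord1. Qed.

Lemma scal0 m : (0 : C)%:M = 0 :> 'M[C]_m.
Proof. by apply/matrixP => i j; rewrite !mxE mul0rn. Qed.

Lemma scal1_inj (a b : C) : a%:M = b%:M :> 'M[C]_1 -> a = b.
Proof. by move/matrixP/(_ 0 0); rewrite !mxE eqxx !mulr1n. Qed.

Lemma ac6 (V : zmodType) (a b c d e f : V) :
  a + b + c + (d + e) + f = a + (b + d) + (c + f + e).
Proof.
rewrite -!addrA; congr (_ + _); congr (_ + _); rewrite [LHS]addrCA; congr (_ + _).
by congr (_ + _); rewrite addrC.
Qed.

Section G.
Variable n : nat.
Local Notation N := (dimV n).

Definition wi (k : 'I_(n + n)) : 'I_N := @Ordinal N k.+1 (ltnW (ltn_ord k)).

Lemma wi_inj : injective wi.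
Proof. by move=> a b [] /val_inj. Qed.

Lemma wi_eq a b : (wi a == wi b) = (a == b).
Proof. exact: (inj_eq wi_inj). Qed.

Lemma wi_0 k : (wi k == ord0) = false.
Proof. by []. Qed.

Lemma wi_max k : (wi k == ord_max) = false.
Proof. by apply/negbTE; rewrite -val_eqE /= eqSS neq_ltn ltn_ord. Qed.

Lemma max_0 : ((ord_max : 'I_N) == ord0) = false.
Proof. by []. Qed.

Lemma zero_max : ((ord0 : 'I_N) == ord_max) = false.
Proof. by []. Qed.

Variant idx_spec (i : 'I_N) : Type :=
 | Idx0 of i = ord0
 | IdxM of i = ord_max
 | IdxW k of i = wi k.

Lemma idxP i : idx_spec i.
Proof.
case: i => [[|m] hm].
  by apply: Idx0; apply: val_inj.
have [e|ne] := eqVneq m (n + n).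
  by apply: IdxM; apply: val_inj => /=; rewrite e.
have hk : (m < n + n)%N by rewrite ltn_neqAle ne -ltnS.
by apply: (@IdxW _ (Ordinal hk)); apply: val_inj.
Qed.

Definition e0 : 'cV[C]_N := delta_mx ord0 0.
Definition eL : 'cV[C]_N := delta_mx ord_max 0.
Definition E : 'M[C]_(N, n + n) := \matrix_(i, k) (i == wi k)%:R.

Lemma e0E i : e0 i 0 = (i == ord0)%:R.
Proof. by rewrite mxE eqxx andbT. Qed.
Lemma eLE i : eL i 0 = (i == ord_max)%:R.
Proof. by rewrite mxE eqxx andbT. Qed.

Lemma Ev_wi (v : 'cV[C]_(n + n)) k : (E *m v) (wi k) 0 = v k 0.
Proof.
rewrite mxE -(sumdelta k (fun j => v j 0)); apply: eq_bigr => j _.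
by rewrite mxE wi_eq eq_sym.
Qed.

Lemma Ev_0 (v : 'cV[C]_(n + n)) : (E *m v) ord0 0 = 0.
Proof. by rewrite mxE big1 // => j _; rewrite mxE eq_sym wi_0 mul0r. Qed.

Lemma Ev_max (v : 'cV[C]_(n + n)) : (E *m v) ord_max 0 = 0.
Proof. by rewrite mxE big1 // => j _; rewrite mxE eq_sym wi_max mul0r. Qed.

Lemma vEt (v : 'rV[C]_(n + n)) i : (v *m E^T) 0 i = (E *m v^T) i 0.
Proof. by rewrite -[v in LHS]trmxK -trmx_mul mxE. Qed.

Lemma tr_e0_x (x : 'cV[C]_N) : e0^T *m x = (x ord0 0)%:M.
Proof.
rewrite [LHS]mx11_scalar; congr (_%:M).
rewrite mxE -(sumdelta ord0 (fun j => x j 0)); apply: eq_bigr => j _.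
by rewrite !mxE eqxx andbT.
Qed.

Lemma tr_eL_x (x : 'cV[C]_N) : eL^T *m x = (x ord_max 0)%:M.
Proof.
rewrite [LHS]mx11_scalar; congr (_%:M).
rewrite mxE -(sumdelta ord_max (fun j => x j 0)); apply: eq_bigr => j _.
by rewrite !mxE eqxx andbT.
Qed.

Lemma tr_E_x (x : 'cV[C]_N) : E^T *m x = \col_k x (wi k) 0.
Proof.
apply/matrixP => k z; rewrite ord1 !mxE -(sumdelta (wi k) (fun j => x j 0)).
by apply: eq_bigr => j _; rewrite !mxE.
Qed.

Lemma e0e0 : e0^T *m e0 = 1%:M.
Proof. by rewrite tr_e0_x e0E eqxx. Qed.
Lemma e0eL : e0^T *m eL = 0.
Proof. by rewrite tr_e0_x eLE eq_sym max_0 scal0. Qed.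

Lemma eLe0 : eL^T *m e0 = 0.
Proof. by rewrite tr_eL_x e0E max_0 scal0. Qed.
Lemma eLeL : eL^T *m eL = 1%:M.
Proof. by rewrite tr_eL_x eLE eqxx. Qed.
Lemma Ee0 : E^T *m e0 = 0.
Proof. by rewrite tr_E_x; apply/matrixP => k z; rewrite !mxE wi_0. Qed.
Lemma EeL : E^T *m eL = 0.
Proof. by rewrite tr_E_x; apply/matrixP => k z; rewrite !mxE wi_max. Qed.
Lemma e0E0 : e0^T *m E = 0.
Proof. by rewrite -[LHS]trmxK trmx_mul trmxK Ee0 trmx0. Qed.
Lemma eLE0 : eL^T *m E = 0.
Proof. by rewrite -[LHS]trmxK trmx_mul trmxK EeL trmx0. Qed.
Lemma EE : E^T *m E = 1%:M.
Proof.
apply/matrixP => a b; rewrite mxE [RHS]mxE.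
transitivity (E (wi a) b); last by rewrite mxE wi_eq.
rewrite -(sumdelta (wi a) (fun j => E j b)).
by apply: eq_bigr => j _; rewrite !mxE.
Qed.

Lemma decomp (x : 'cV[C]_N) :
  x = x ord0 0 *: e0 + E *m (E^T *m x) + x ord_max 0 *: eL.
Proof.
have h0 := Ev_0 (E^T *m x); have hM := Ev_max (E^T *m x); have hW := Ev_wi (E^T *m x).
move: (E *m (E^T *m x)) h0 hM hW => y h0 hM hW.
apply/matrixP => i z; rewrite ord1 !mxE !andbT.
case: (idxP i) => [->|->|k ->].
- by rewrite h0 eqxx zero_max !mulr1 !mulr0 !addr0.
- by rewrite hM eqxx max_0 !mulr1 !mulr0 !addr0 add0r.
- by rewrite hW wi_0 wi_max !mulr0 addr0 add0r tr_E_x mxE.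
Qed.

Variable p : C.

Definition betarow (w : 'rV[C]_(n + n)) : 'rV[C]_(n + n) :=
  \row_k match split k with
         | inl i => (p - 1) * w 0 (rshift n i)
         | inr i => p * w 0 (lshift n i) end.

Definition beta (w v : 'rV[C]_(n + n)) : C :=
  \sum_(i < n) (p * w 0 (lshift n i) * v 0 (rshift n i)
                + (p - 1) * w 0 (rshift n i) * v 0 (lshift n i)).

Definition Qf (w : 'rV[C]_(n + n)) : C :=
  (p - 2^-1) * \sum_(i < n) w 0 (lshift n i) * w 0 (rshift n i).

Lemma split_l (i : 'I_n) : split (lshift n i) = inl i.
Proof. exact: (unsplitK (inl _ i)). Qed.
Lemma split_r (i : 'I_n) : split (rshift n i) = inr i.
Proof. exact: (unsplitK (inr _ i)). Qed.

Lemma betarowE w v : betarow w *m v^T = (beta w v)%:M.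
Proof.
rewrite [LHS]mx11_scalar; congr (_%:M); rewrite mxE big_split_ord /beta big_split /= addrC.
congr (_ + _); apply: eq_bigr => i _; rewrite !mxE ?split_l ?split_r; ring.
Qed.

Lemma key w v : 2^-1 * omega w v + Qf (w + v) = Qf w + Qf v + beta w v.
Proof.
rewrite /omega /Qf /beta !mulr_sumr -!big_split /=; apply: eq_bigr => i _.
by rewrite !mxE; field.
Qed.

Lemma betarowD w v : betarow (w + v) = betarow w + betarow v.
Proof.
apply/matrixP => z k; rewrite !mxE; case: (split k) => i; rewrite !mxE; ring.
Qed.

Lemma betarowZ a w : betarow (a *: w) = a *: betarow w.
Proof.
apply/matrixP => z k; rewrite !mxE; case: (split k) => i; rewrite !mxE; ring.
Qed.

Lemma beta0l v : beta 0 v = 0.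
Proof. by rewrite /beta big1 // => i _; rewrite !mxE; ring. Qed.

Definition Rr (w : 'rV[C]_(n + n)) : 'rV[C]_N := betarow w *m E^T.
Definition Nv (w : 'rV[C]_(n + n)) : 'M[C]_N := E *m w^T *m e0^T + eL *m Rr w.
Definition Z : 'M[C]_N := eL *m e0^T.
Definition elm (l : C) (u : 'rV[C]_(n + n)) (m : C) : 'M[C]_N := l%:M + Nv u + m *: Z.

Lemma elm_congr l u m l' u' m' : l = l' -> u = u' -> m = m' -> elm l u m = elm l' u' m'.
Proof. by move=> -> -> ->. Qed.

Definition rho (g : Heis n) : 'M[C]_N :=
  1%:M + (E *m g.1^T + (g.2 + Qf g.1) *: eL) *m e0^T + eL *m Rr g.1.

Lemma rho_el g : rho g = elm 1 g.1 (g.2 + Qf g.1).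
Proof.
by rewrite /rho /elm /Nv /Z mulmxDl -scalemxAl !addrA [LHS]addrAC.
Qed.

Lemma NvD u v : Nv (u + v) = Nv u + Nv v.
Proof.
by rewrite /Nv /Rr betarowD linearD /= !mulmxDl !mulmxDr !mulmxDl [LHS]addrACA.

Qed.


Lemma NvZ a u : Nv (a *: u) = a *: Nv u.
Proof.
rewrite /Nv /Rr betarowZ linearZ /= scalerDr -!scalemxAl -!scalemxAr.
by rewrite -scalemxAl.
Qed.

Lemma Nv0 : Nv 0 = 0.
Proof. by rewrite -(scaler0 _ 0) NvZ scale0r. Qed.

Lemma R1 k (Y : 'M[C]_(n + n, k)) : e0^T *m (E *m Y) = 0.
Proof. by rewrite mulmxA e0E0 mul0mx. Qed.
Lemma R2 k (Y : 'M[C]_(1, k)) : e0^T *m (eL *m Y) = 0.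
Proof. by rewrite mulmxA e0eL mul0mx. Qed.
Lemma R3 k (Y : 'M[C]_(1, k)) : E^T *m (eL *m Y) = 0.
Proof. by rewrite mulmxA EeL mul0mx. Qed.
Lemma R4 k (Y : 'M[C]_(n + n, k)) : E^T *m (E *m Y) = Y.
Proof. by rewrite mulmxA EE mul1mx. Qed.

Lemma NvNv u v : Nv u *m Nv v = beta u v *: Z.
Proof.
rewrite /Nv /Rr /Z !mulmxDl !mulmxDr -!mulmxA !(R1, R2, R3, R4, mulmx0, add0r, addr0).
by rewrite (mulmxA (betarow u)) betarowE mul_scalar_mx scalemxAr.
Qed.

Lemma NvZZ u : Nv u *m Z = 0.
Proof.
by rewrite /Nv /Rr /Z !mulmxDl -!mulmxA !(R1, R2, R3, R4, e0eL, EeL, mulmx0, add0r, addr0).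
Qed.

Lemma ZNv u : Z *m Nv u = 0.
Proof.
by rewrite /Nv /Rr /Z !mulmxDr -!mulmxA !(R1, R2, R3, R4, e0eL, EeL, mulmx0, add0r, addr0).
Qed.

Lemma ZZ : Z *m Z = 0.
Proof. by rewrite /Z -!mulmxA !(R1, R2, mulmx0). Qed.


Lemma el_mul l u m l' u' m' :
  elm l u m *m elm l' u' m' = elm (l * l') (l *: u' + l' *: u) (l * m' + l' * m + beta u u').
Proof.
rewrite /elm NvD !NvZ.
have h1 := NvNv u u'; have h2 := NvZZ u; have h3 := NvZZ u'; have h4 := ZNv u.
have h5 := ZNv u'; have h6 := ZZ.
move: (Nv u) (Nv u') Z h1 h2 h3 h4 h5 h6 => X Y W h1 h2 h3 h4 h5 h6.
rewrite !mulmxDl !mulmxDr !mul_scalar_mx !mul_mx_scalar -!scalemxAl -!scalemxAr.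
by rewrite h1 h2 h5 h6 !scaler0 !addr0 scale_scalar_mx !scalerDl !scalerA ac6.
Qed.

Lemma Rre0 u : Rr u *m e0 = 0.
Proof. by rewrite /Rr -mulmxA Ee0 mulmx0. Qed.

Lemma el_e0 l u m : elm l u m *m e0 = l *: e0 + E *m u^T + m *: eL.
Proof.
rewrite /elm /Nv /Z !mulmxDl mul_scalar_mx -!mulmxA e0e0 mulmx1 Ee0 !mulmx0 addr0.
by rewrite -scalemxAl -mulmxA e0e0 mulmx1.
Qed.

Lemma coef0 l u m : e0^T *m (l *: e0 + E *m u^T + m *: eL) = l%:M.
Proof.
by rewrite !mulmxDr -!scalemxAr e0e0 R1 e0eL scaler0 !addr0 scale_scalar_mx mulr1.
Qed.
Lemma coefW l u m : E^T *m (l *: e0 + E *m u^T + m *: eL) = u^T.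
Proof.
by rewrite !mulmxDr -!scalemxAr Ee0 R4 EeL !scaler0 addr0 add0r.
Qed.
Lemma coefL l u m : eL^T *m (l *: e0 + E *m u^T + m *: eL) = m%:M.
Proof.
rewrite !mulmxDr -!scalemxAr eLe0 eLeL mulmxA eLE0 mul0mx scaler0 !add0r.
by rewrite scale_scalar_mx mulr1.
Qed.

Lemma el_inj l u m l' u' m' : elm l u m = elm l' u' m' -> [/\ l = l', u = u' & m = m'].
Proof.
move=> h; have h' := congr1 (fun M => M *m e0) h; move: h' => /= h'.
rewrite !el_e0 in h'.
split.
- by apply: scal1_inj; rewrite -(coef0 l u m) h' coef0.
- by apply: trmx_inj; rewrite -(coefW l u m) h' coefW.
- by apply: scal1_inj; rewrite -(coefL l u m) h' coefL.
Qed.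

Lemma el_scal c : elm c 0 0 = c%:M.
Proof. by rewrite /elm Nv0 scale0r !addr0. Qed.

Lemma rho_mul g h : rho g *m rho h = rho (hmul g h).
Proof.
rewrite !rho_el el_mul /hmul /=; apply: elm_congr; first by rewrite mulr1.
  by rewrite !scale1r addrC.
have k := key g.1 h.1.
have -> : Qf (g.1 + h.1) = Qf g.1 + Qf h.1 + beta g.1 h.1 - 2^-1 * omega g.1 h.1.
  by rewrite -k; ring.
ring.
Qed.
End G.
Arguments E {n}. Arguments e0 {n}. Arguments eL {n}. Arguments Z {n}.

Section H.
Variable n : nat.
Variable p : C.
Local Notation N := (dimV n).
Local Notation PF := (@heis_polyfun n).

Definition PFM a b (f : Heis n -> 'M[C]_(a, b)) := forall i j, PF (fun g => f g i j).

Lemma pfm_const a b (A : 'M[C]_(a, b)) : PFM (fun _ => A).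
Proof. by move=> i j; apply: pf_const. Qed.

Lemma pfm_add a b (f f' : Heis n -> 'M[C]_(a, b)) : PFM f -> PFM f' -> PFM (fun g => f g + f' g).
Proof.
move=> h h' i j; apply: (@pf_ext _ _ (fun g => f g i j + f' g i j)); first by move=> g; rewrite mxE.
exact: pf_add.
Qed.

Lemma pfm_mul a b c (f : Heis n -> 'M[C]_(a, b)) (f' : Heis n -> 'M[C]_(b, c)) :
  PFM f -> PFM f' -> PFM (fun g => f g *m f' g).
Proof.
move=> h h' i j; apply: (@pf_ext _ _ (fun g => \sum_k f g i k * f' g k j)); first by move=> g; rewrite mxE.
by apply: pf_sum => k; apply: pf_mul.
Qed.

Lemma pfm_scale a b (s : Heis n -> C) (f : Heis n -> 'M[C]_(a, b)) :
  PF s -> PFM f -> PFM (fun g => s g *: f g).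
Proof.
move=> hs h i j; apply: (@pf_ext _ _ (fun g => s g * f g i j)); first by move=> g; rewrite mxE.
exact: pf_mul.
Qed.

Lemma pfm_w : PFM (fun g : Heis n => g.1^T).
Proof.
move=> i j; apply: (@pf_ext _ _ (fun g => g.1 0 i)); first by move=> g; rewrite mxE ord1.
exact: pf_w.
Qed.

Lemma pf_Qf : PF (fun g => Qf p g.1).
Proof.
apply: pf_mul; first exact: pf_const.
by apply: pf_sum => i; apply: pf_mul; apply: pf_w.
Qed.

Lemma pfm_betarow : PFM (fun g : Heis n => betarow p g.1).
Proof.
move=> i k; apply: (@pf_ext _ _ (fun g => match split k with
         | inl i => (p - 1) * g.1 0 (rshift n i)
         | inr i => p * g.1 0 (lshift n i) end)); first by move=> g; rewrite mxE.
by case: (split k) => a; apply: pf_mul; [apply: pf_const | apply: pf_w | apply: pf_const | apply: pf_w].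
Qed.

Lemma rho_pf i j : PF (fun g : Heis n => rho p g i j).
Proof.
apply: (pfm_add (pfm_add _ _) _); first exact: pfm_const.
  apply: pfm_mul; last exact: pfm_const.
  apply: pfm_add; first by apply: pfm_mul; [apply: pfm_const | apply: pfm_w].
  apply: pfm_scale; last exact: pfm_const.
  by apply: pf_add; [apply: pf_t | apply: pf_Qf].
apply: pfm_mul; first exact: pfm_const.
apply: pfm_mul; last exact: pfm_const.
exact: pfm_betarow.
Qed.

Lemma Qf0 : Qf p (0 : 'rV[C]_(n + n)) = 0.
Proof. by rewrite /Qf big1 ?mulr0 // => i _; rewrite !mxE mul0r. Qed.

Lemma rho_unit (g : Heis n) : rho p g \in unitmx.
Proof.
have h : rho p g *m elm p 1 (- g.1) (- (g.2 + Qf p g.1) - beta p g.1 (- g.1)) = 1%:M.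
  rewrite rho_el el_mul !scale1r mulr1 addNr !mul1r -(el_scal n p); apply: elm_congr => //; ring.
by case: (mulmx1_unit h).
Qed.

Lemma rho_eff (g : Heis n) : (exists c : C, rho p g = c%:M) -> g = hone n.
Proof.
case=> c; rewrite rho_el -(el_scal n p) => /el_inj [_ e1 e2].
case: g e1 e2 => w t /= -> ; rewrite Qf0 addr0 => ->; by [].
Qed.

Lemma rho_e0 (g : Heis n) : rho p g *m e0 = 1 *: e0 + E *m g.1^T + (g.2 + Qf p g.1) *: eL.
Proof. by rewrite rho_el el_e0. Qed.

Lemma scal1_neq0 (a : C) : (a%:M != 0 :> 'M[C]_1) = (a != 0).
Proof.
apply/idP/idP => h; apply: contra h => /eqP h; apply/eqP.
  by rewrite h scal0.
by apply: scal1_inj; rewrite h scal0.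
Qed.

Lemma orbit (x : 'cV[C]_N) : x != 0 ->
  (e0^T *m x != 0 <-> exists g, proj_eq (rho p g *m e0) x).
Proof.
move=> x0; rewrite tr_e0_x scal1_neq0; split.
  move=> a0; set a := x ord0 0 in a0 *.
  set w := (a^-1 *: (E^T *m x))^T.
  exists (w, a^-1 * x ord_max 0 - Qf p w); exists a; split => //.
  rewrite rho_e0 /= subrK /w trmxK -scalemxAr !scalerDr !scalerA mulfV // !scale1r.
  by rewrite mulr1 mulrA mulfV // mul1r [LHS]decomp.
case=> g [c [c0 ->]]; rewrite mxE rho_e0.
suff -> : (1 *: e0 + E *m g.1^T + (g.2 + Qf p g.1) *: eL) ord0 0 = 1 by rewrite mulr1.
have := coef0 1 g.1 (g.2 + Qf p g.1); rewrite tr_e0_x.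
by move/scal1_inj.
Qed.

Lemma Hstr : Hstructure (@rho n p) e0^T e0.
Proof.
split; first exact: rho_pf.
split; first exact: rho_unit.
split; first by move=> g h; exists 1; rewrite scale1r rho_mul oner_neq0.
split; first exact: rho_eff.
split; first by rewrite trmx_delta; apply/eqP => /matrixP/(_ 0 ord0); rewrite !mxE !eqxx => /eqP; rewrite oner_eq0.
split; first by apply/eqP => /matrixP/(_ ord0 0); rewrite !mxE !eqxx => /eqP; rewrite oner_eq0.
exact: orbit.
Qed.

End H.

Section T.
Variable n : nat.
Variable p : C.
Local Notation N := (dimV n).

Lemma rho_hcent t : rho p (hcent n t) = 1%:M + t *: Z.
Proof. by rewrite rho_el /= Qf0 addr0 /elm Nv0 addr0. Qed.

Lemma hyper (x : 'cV[C]_N) : x != 0 -> e0^T *m x = 0 -> proj_eq x (rho p (hcent n 1) *m x).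
Proof.
move=> _ h; exists 1; split; first exact: oner_neq0.
by rewrite rho_hcent mulmxDl mul1mx !scale1r /Z -mulmxA h mulmx0 addr0.
Qed.

Lemma hcent_e0 t : rho p (hcent n t) *m e0 = e0 + t *: eL.
Proof. by rewrite rho_hcent mulmxDl mul1mx -scalemxAl /Z -mulmxA e0e0 mulmx1. Qed.

Definition Io (y : 'cV[C]_N) := exists t : C, proj_eq (rho p (hcent n t) *m e0) y.

Lemma eL_neq0 : (eL : 'cV[C]_N) != 0.
Proof. by apply/eqP => /matrixP/(_ ord_max 0); rewrite !mxE !eqxx => /eqP; rewrite oner_eq0. Qed.

Lemma Io_entry0 y : Io y -> y ord0 0 != 0.
Proof.
by case=> t [c [c0 ->]]; rewrite hcent_e0 !mxE !eqxx /= mulr0 addr0 mulr1.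
Qed.

Lemma Io_entryW y k : Io y -> y (wi k) 0 = 0.
Proof.
case=> t [c [c0 ->]]; rewrite hcent_e0 !mxE !andbT wi_0 wi_max.
by rewrite mulr0 addr0 mulr0.
Qed.

Definition monoW (k : 'I_(n + n)) : seq (C * N.-tuple nat) :=
  [:: (1, [tuple (i == wi k : nat) | i < N])].

Lemma monoW_homog k : homog 1 (monoW k).
Proof.
rewrite /homog /= andbT (bigD1 (wi k)) //= tnth_mktuple eqxx big1 // => i /negPf ik.
by rewrite tnth_mktuple ik.
Qed.

Lemma monoW_eval k y : heval (monoW k) y = y (wi k) 0.
Proof.
rewrite /heval big_seq1; cbn [fst snd]; rewrite mul1r (bigD1 (wi k)) // tnth_mktuple eqxx expr1.
by rewrite big1 ?Monoid.mulm1 // => i /negPf ik; rewrite tnth_mktuple ik expr0.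
Qed.

Definition entp (c : C) (i : 'I_N) : {poly C} :=
  if i == ord0 then 'X else if i == ord_max then c%:P else 0.

Definition Pol (s : seq (C * N.-tuple nat)) (c : C) : {poly C} :=
  \sum_(q <- s) q.1%:P * \prod_(i < N) entp c i ^+ tnth q.2 i.

Lemma Pol_eval (s : seq (C * N.-tuple nat)) c a : (Pol s c).[a] = heval s (a *: e0 + c *: eL).
Proof.
rewrite /Pol /heval horner_sum; apply: eq_bigr => q _.
rewrite hornerM hornerC horner_prod; congr (_ * _); apply: eq_bigr => i _.
rewrite horner_exp; congr (_ ^+ _); rewrite /entp !mxE !andbT.
case: (idxP i) => [->|->|k ->].
- by rewrite eqxx zero_max hornerX mulr1 mulr0 addr0.
- by rewrite eqxx max_0 hornerC mulr1 mulr0 add0r.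
- by rewrite wi_0 wi_max horner0 !mulr0 addr0.
Qed.

Lemma clos_eL (s : seq (C * N.-tuple nat)) c : (forall a, a != 0 -> heval s (a *: e0 + c *: eL) = 0) ->
  heval s (c *: eL) = 0.
Proof.
move=> h.
have P0 : Pol s c = 0.
  apply: (@roots_geq_poly_eq0 _ _ [seq (i.+1)%:R | i <- iota 0 (size (Pol s c))]).
  - apply/allP => x /mapP [i _ ->]; rewrite /root Pol_eval h //.
    by rewrite pnatr_eq0.
  - rewrite map_inj_uniq ?iota_uniq // => a b /eqP; rewrite eqr_nat => /eqP [] //.
  - by rewrite size_map size_iota.
by have := Pol_eval s c 0; rewrite P0 horner0 scale0r add0r => <-.
Qed.

Lemma closure_cond (x : 'cV[C]_N) : x != 0 ->
  ((zclosure Io x /\ ~ Io x) <-> proj_eq eL x).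
Proof.
move=> x0; split.
  case=> [[_ hz] nI].
  have hW : E^T *m x = 0.
    rewrite tr_E_x; apply/matrixP => k z; rewrite !mxE -monoW_eval.
    apply: (hz 1%N); first exact: monoW_homog.
    by move=> y Iy; rewrite monoW_eval; apply: Io_entryW.
  have dx := decomp x; rewrite hW mulmx0 addr0 in dx.
  have a0 : x ord0 0 = 0.
    case: (eqVneq (x ord0 0) 0) => // a0.
    exfalso; apply: nI; exists (x ord_max 0 / x ord0 0); exists (x ord0 0); split => //.
    by rewrite hcent_e0 scalerDr scalerA mulrCA mulfV // mulr1 -dx.
  rewrite a0 scale0r add0r in dx.
  exists (x ord_max 0); split => //.
  by apply: contra x0 => /eqP h; rewrite dx h scale0r.
case=> c [c0 ->]; split; last first.
  move/Io_entry0; rewrite !mxE zero_max mulr0 eqxx //.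
split; first by rewrite scaler_eq0 negb_or c0 eL_neq0.
move=> d s _ hI; apply: clos_eL => a a0; apply: hI.
exists (c / a); exists a; split => //.
by rewrite hcent_e0 scalerDr scalerA mulrCA mulfV // mulr1.
Qed.

End T.

Section Q.
Variable n : nat.
Variable p : C.
Local Notation N := (dimV n).

Definition qm : 'M[C]_((n + n).+1, N) := \matrix_(i, j) ((i : nat) == j)%:R.

Lemma q_eL : qm *m eL = 0.
Proof.
rewrite /eL -colE; apply/matrixP => i z; rewrite !mxE.
by rewrite ltn_eqF.
Qed.

Lemma q_rank : \rank qm = (n + n).+1.
Proof.
apply/eqP; apply/row_freeP; exists qm^T; apply/matrixP => i j; rewrite !mxE.
transitivity (((j : nat) == i)%:R : C); last by rewrite eq_sym.
rewrite -(sumdelta (widen_ord (leqnSn _) i) (fun k : 'I_N => ((j : nat) == k)%:R)).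
by apply: eq_bigr => k _; rewrite !mxE -val_eqE /= eq_sym.
Qed.

Lemma qE i k : (qm *m E) i k = ((i : nat) == k.+1)%:R.
Proof.
rewrite mxE -(sumdelta (wi k) (fun j : 'I_N => ((i : nat) == j)%:R)).
by apply: eq_bigr => j _; rewrite !mxE mulrC.
Qed.

Lemma qEw (w : 'rV[C]_(n + n)) i :
  (qm *m E *m w^T) i 0 = if unlift ord0 i is Some k then w 0 k else 0.
Proof.
rewrite mxE; case: unliftP => [k ->|->].
  rewrite -(sumdelta k (fun j => w 0 j)); apply: eq_bigr => j _.
  by rewrite qE mxE /= eqSS eq_sym.
by rewrite big1 // => j _; rewrite qE mul0r.
Qed.

Lemma taut_eq (w : 'rV[C]_(n + n)) :
  taut_mx w = 1%:M + (qm *m E *m w^T) *m (delta_mx ord0 0)^T.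
Proof.
have h := qEw w; move: (qm *m E *m w^T) h => y h.
apply/matrixP => i j; rewrite !mxE big_ord1 h !mxE eqxx /=.
by rewrite andbT [in RHS]mulrC.
Qed.

Lemma e0q : (delta_mx (ord0 : 'I_(n + n).+1) 0)^T *m qm = e0^T.
Proof.
rewrite trmx_delta -rowE; apply/matrixP => i j; rewrite !mxE.
by rewrite ord1 eqxx andbT -val_eqE eq_sym.
Qed.

Lemma q_rho (g : Heis n) : qm *m rho p g = 1 *: (taut_mx g.1 *m qm).
Proof.
rewrite scale1r taut_eq mulmxDl mul1mx -mulmxA e0q /rho !mulmxDr mulmx1.
rewrite !mulmxA q_eL !mul0mx addr0 mulmxDr -scalemxAr q_eL scaler0 addr0.
by rewrite mulmxA.
Qed.

End Q.

Lemma scalD m (a b : C) : (a + b)%:M = a%:M + b%:M :> 'M[C]_m.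
Proof. by apply/matrixP => i j; rewrite !mxE mulrnDl. Qed.

Section A.
Variable n : nat.
Variable p : C.
Local Notation N := (dimV n).
Local Notation el := (@elm n p).
Local Notation A := (assoc_alg (@rho n p)).

Lemma el_add l u m l' u' m' : el l u m + el l' u' m' = el (l + l') (u + u') (m + m').
Proof.
rewrite /elm NvD scalD scalerDl.
move: (l%:M) (l'%:M) (Nv p u) (Nv p u') (m *: Z) (m' *: Z) => a b c d e f.
by rewrite [LHS]addrACA [X in X + _ = _]addrACA.
Qed.

Lemma el_scale c l u m : c *: el l u m = el (c * l) (c *: u) (c * m).
Proof. by rewrite /elm NvZ; move: (Nv p u) => X; rewrite !scalerDr scale_scalar_mx scalerA. Qed.

Lemma el0 : el 0 0 0 = 0.
Proof. by rewrite el_scal scal0. Qed.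

Lemma gen_Sp M : A M -> exists l u m, M = el l u m.
Proof.
elim=> {M}.
- move=> M [c [g [_ ->]]]; rewrite rho_el el_scale; eauto.
- by exists 1, 0, 0; rewrite el_scal.
- move=> M M' _ [l [u [m ->]]] _ [l' [u' [m' ->]]]; rewrite el_add; eauto.
- move=> c M _ [l [u [m ->]]]; rewrite el_scale; eauto.
- move=> M M' _ [l [u [m ->]]] _ [l' [u' [m' ->]]]; rewrite el_mul; eauto.
Qed.

Lemma A_rho g : A (rho p g).
Proof. by apply: gen_alg_gen; exists 1, g; rewrite scale1r oner_neq0. Qed.

Lemma A_one : A 1%:M.
Proof. exact: gen_alg_one. Qed.

Lemma in_A l u m : A (el l u m).
Proof.
have e : el l u m = (rho p (u, - Qf p u) + (-1) *: 1%:M)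
                    + (m *: (rho p (hcent n 1) + (-1) *: 1%:M) + l *: 1%:M).
  rewrite !rho_el /= Qf0 -!(el_scal n p) !el_scale !el_add !el_scale !el_add.
  apply: elm_congr; first ring.
    by rewrite !(scaler0, addr0, add0r).
  ring.
rewrite e; apply: gen_alg_add; apply: gen_alg_add.
- exact: A_rho.
- by apply: gen_alg_scale; apply: A_one.
- apply: gen_alg_scale; apply: gen_alg_add; first exact: A_rho.
  by apply: gen_alg_scale; apply: A_one.
- by apply: gen_alg_scale; apply: A_one.
Qed.

End A.

Definition Pc N (c : C) (A : 'M[C]_N -> Prop) :=
  exists x y0, [/\ A x, A y0, x *m x = 0 /\ y0 *m y0 = 0, x *m y0 != 0 &
    forall y, A y -> exists d : C, x *m y + (- c) *: (y *m x) = d *: x].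

Lemma Pc_transfer N (S S' : 'M[C]_N -> Prop) c :
  alg_iso (gen_alg S) (gen_alg S') -> Pc c (gen_alg S) -> Pc c (gen_alg S').
Proof.
move=> [f [fAB [fsurj [finj [fadd [fscale [fmul f1]]]]]]] [x [y0 [Ax Ay0 [xx yy] xy hy]]].
have A1 : gen_alg S 1%:M := gen_alg_one S.
have A0 : gen_alg S 0 by rewrite -(scale0r 1%:M); apply: gen_alg_scale.
have f0 : f 0 = 0 by have := fscale 0 _ A1; rewrite !scale0r.
exists (f x), (f y0); split.
- exact: fAB.
- exact: fAB.
- by split; rewrite -fmul // ?xx ?yy f0.
- apply/eqP => h; move/eqP: xy; apply; apply: finj; first exact: gen_alg_mul.
    exact: A0.
  by rewrite fmul // h f0.
- move=> y' By'; case: (fsurj _ By') => y Ay <-; case: (hy y Ay) => d hd; exists d.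
  have e := congr1 f hd.
  have Axy := gen_alg_mul Ax Ay; have Ayx := gen_alg_mul Ay Ax.
  by rewrite (fadd _ _ Axy (gen_alg_scale _ Ayx)) (fscale _ _ Ayx) (fscale _ _ Ax) (fmul _ _ Ax Ay) (fmul _ _ Ay Ax) in e.
Qed.

Section I.
Variable n : nat.
Variable p : C.
Local Notation N := (dimV n).
Local Notation el := (@elm n p).
Local Notation A := (assoc_alg (@rho n p)).

Lemma lr_neq (a b : 'I_n) : (lshift n a == rshift n b) = false.
Proof. by apply/negbTE; rewrite -val_eqE /= neq_ltn (leq_trans (ltn_ord a) (leq_addr _ _)). Qed.
Lemma rl_neq (a b : 'I_n) : (rshift n b == lshift n a) = false.
Proof. by rewrite eq_sym lr_neq. Qed.
Lemma ll_eq (a b : 'I_n) : (lshift n a == lshift n b) = (a == b).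
Proof. exact: (inj_eq (@lshift_inj n n)). Qed.
Lemma rr_eq (a b : 'I_n) : (rshift n a == rshift n b) = (a == b).
Proof. exact: (inj_eq (@rshift_inj n n)). Qed.

Definition dl (i : 'I_n) : 'rV[C]_(n + n) := delta_mx 0 (lshift n i).
Definition dr (i : 'I_n) : 'rV[C]_(n + n) := delta_mx 0 (rshift n i).

Lemma beta_dl_v i v : beta p (dl i) v = p * v 0 (rshift n i).
Proof.
rewrite /beta -(sumdelta i (fun j => p * v 0 (rshift n j))); apply: eq_bigr => j _.
by rewrite !mxE ll_eq rl_neq eq_sym /=; ring.
Qed.
Lemma beta_v_dl i v : beta p v (dl i) = (p - 1) * v 0 (rshift n i).
Proof.
rewrite /beta -(sumdelta i (fun j => (p - 1) * v 0 (rshift n j))); apply: eq_bigr => j _.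
by rewrite !mxE ll_eq rl_neq eq_sym /=; ring.
Qed.
Lemma beta_dr_v i v : beta p (dr i) v = (p - 1) * v 0 (lshift n i).
Proof.
rewrite /beta -(sumdelta i (fun j => (p - 1) * v 0 (lshift n j))); apply: eq_bigr => j _.
by rewrite !mxE rr_eq lr_neq eq_sym /=; ring.
Qed.
Lemma beta_v_dr i v : beta p v (dr i) = p * v 0 (lshift n i).
Proof.
rewrite /beta -(sumdelta i (fun j => p * v 0 (lshift n j))); apply: eq_bigr => j _.
by rewrite !mxE rr_eq lr_neq eq_sym /=; ring.
Qed.

Lemma el_neq0 l u m : el l u m != 0 -> (l != 0) || (u != 0) || (m != 0).
Proof.
apply: contraR; rewrite !negb_or !negbK => /andP [/andP [/eqP -> /eqP ->] /eqP ->].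
by rewrite el0.
Qed.

Lemma el_congr l u m l' u' m' : l = l' -> u = u' -> m = m' -> el l u m = el l' u' m'.
Proof. by move=> -> -> ->. Qed.

Lemma Pc_true (i0 : 'I_n) : p != 0 -> p - 1 != 0 -> Pc (p / (p - 1)) A.
Proof.
move=> p0 p1.
exists (el 0 (dl i0) 0), (el 0 (dr i0) 0); split.
- exact: in_A.
- exact: in_A.
- split.
    have hb : beta p (dl i0) (dl i0) = 0 by rewrite beta_dl_v mxE rl_neq andbF mulr0.
    by rewrite el_mul hb !mul0r !scale0r !addr0 el0.
  have hb : beta p (dr i0) (dr i0) = 0 by rewrite beta_dr_v mxE lr_neq andbF mulr0.
  by rewrite el_mul hb !mul0r !scale0r !addr0 el0.
- have hb : beta p (dl i0) (dr i0) = p by rewrite beta_dl_v mxE !eqxx mulr1.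
  rewrite el_mul hb !mul0r !scale0r !addr0 !add0r.
  apply/negP => /eqP; rewrite -(el0 n p) => /el_inj [_ _ h].
  by move: p0; rewrite h eqxx.
move=> y /gen_Sp [l [v [m ->]]]; exists ((1 - p / (p - 1)) * l).
rewrite !el_mul !el_scale el_add; apply: el_congr.
- ring.
- rewrite !scale0r !addr0 add0r !scalerA -scalerDl; congr (_ *: _); ring.
rewrite beta_dl_v beta_v_dl; field.
exact: p1.
Qed.


Lemma Pc_false c : p - 1 != c * p -> p != c * (p - 1) -> ~ Pc c A.
Proof.
move=> h1 h2 [x [y0 [Ax Ay0 [xx yy] xy hy]]].
case: (gen_Sp Ax) => l [u [m ex]]; case: (gen_Sp Ay0) => l0 [u0 [m0 ey]].
subst x y0.
move: xx; rewrite el_mul -(el0 n p) => /el_inj [/eqP hl _ _].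
move: hl; rewrite mulf_eq0 orbb => /eqP hl; subst l.
move: yy; rewrite el_mul -(el0 n p) => /el_inj [/eqP hl _ _].
move: hl; rewrite mulf_eq0 orbb => /eqP hl; subst l0.
have u0n : u != 0.
  apply: contra xy => /eqP ->.
  by rewrite el_mul beta0l !mul0r !scale0r !addr0 el0.
have test : forall v, (forall d, d *: u = 0 -> d = 0) ->
    exists d, beta p u v + - c * beta p v u = d * m /\ d *: u = 0.
  move=> v _; case: (hy (el 0 v 0) (in_A _ _ _ _)) => d hd.
  exists d; move: hd; rewrite !el_mul !el_scale el_add => /el_inj [_ hv hs].
  split; last first.
    by move: hv; rewrite !(scale0r, addr0, add0r, scaler0) => <-.
  by move: hs; rewrite !(mul0r, mulr0, addr0, add0r).
have dz : forall d, d *: u = 0 -> d = 0.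
  by move=> d /eqP; rewrite scaler_eq0 (negbTE u0n) orbF => /eqP.
apply/negP: u0n; rewrite negbK; apply/eqP/rowP => k; rewrite mxE.
case: (split_ordP k) => i ->.
- case: (test (dr i) dz) => d [hs /dz hd]; move: hs; rewrite hd mul0r beta_v_dr beta_dr_v.
  move/eqP; rewrite mulrA -mulrDl mulf_eq0 => /orP [|/eqP //].
  by rewrite mulNr addr_eq0 opprK (negbTE h2).
- case: (test (dl i) dz) => d [hs /dz hd]; move: hs; rewrite hd mul0r beta_v_dl beta_dl_v.
  move/eqP; rewrite mulrA -mulrDl mulf_eq0 => /orP [|/eqP //].
  by rewrite mulNr addr_eq0 opprK (negbTE h1).
Qed.

End I.

Lemma natfrac (a b c d : nat) : (a%:R : C) = b%:R / (c.+1)%:R * d%:R -> (a * c.+1 = b * d)%N.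
Proof.
move=> e; apply/eqP; rewrite -(eqr_nat C) !natrM e; apply/eqP; field.
by rewrite addrC natr1 pnatr_eq0.
Qed.

Lemma pm1 m : ((m.+2)%:R - 1 : C) = (m.+1)%:R.
Proof. by rewrite mulrSr addrK. Qed.

Theorem proposition3p10 (n : nat) (hn : (1 <= n)%N) :
  exists A : nat -> ('M[C]_(dimV n) -> Prop),
    (forall k, tautological_algebra (A k)) /\
    (forall k l, k <> l -> ~ alg_iso (A k) (A l)).
Proof.
pose pk k : C := (k.+2)%:R.
exists (fun k => assoc_alg (@rho n (pk k))); split.
  move=> k; exists (@rho n (pk k)); split => //.
  exists e0^T, e0, eL, (qm n).
  split; first exact: Hstr.
  split; first exact: hyper.
  split; first exact: eL_neq0.
  split; first exact: closure_cond.
  split; first exact: q_rank.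
  split; first exact: q_eL.
  by move=> g; exists 1; split; [exact: oner_neq0 | exact: q_rho].
move=> k l kl iso.
have i0 : 'I_n := Ordinal hn.
have pk0 : pk k != 0 by rewrite pnatr_eq0.
have pk1 : pk k - 1 != 0 by rewrite /pk pm1 pnatr_eq0.
have := Pc_transfer iso (Pc_true i0 pk0 pk1).
apply: Pc_false; rewrite /pk !pm1.
- apply/eqP => /natfrac; lia.
- apply/eqP => /natfrac; lia.
Qed.
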